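(* Let $\tilde w\in\mathbb{R}^{r_k\times n_k}$ with $r_k\le n_k$ be entrywise nonnegative, of full rank, with each column summing to $1$. Let $\sigma_1$ be its largest singular value and $z_{\max}$ its maximal row sum. Then (1) $n_k/r_k\le\sigma_1^2\le z_{\max}$; (2) $\sigma_1^2=n_k/r_k$ if and only if all row sums of $\tilde w$ are equal, i.e. $z_{\max}=n_k/r_k$. *)

(* Defs.v *)
From mathcomp Require Import all_boot all_order all_algebra.
From mathcomp Require Import all_reals.
Set Implicit Arguments. Unset Strict Implicit. Unset Printing Implicit Defensive.
Import Order.TTheory GRing.Theory Num.Theory.
Local Open Scope ring_scope.

Definition singular_value (R : realType) (r n : nat) (W : 'M[R]_(r, n)) (s : R) : Prop :=
  0 <= s /\ eigenvalue (W^T *m W) (s ^+ 2).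

Definition largest_singular_value (R : realType) (r n : nat) (W : 'M[R]_(r, n)) (s : R) : Prop :=
  singular_value W s /\ forall t, singular_value W t -> t <= s.

Definition row_sum (R : realType) (r n : nat) (W : 'M[R]_(r, n)) (i : 'I_r) : R :=
  \sum_(j < n) W i j.

Definition col_sum (R : realType) (r n : nat) (W : 'M[R]_(r, n)) (j : 'I_n) : R :=
  \sum_(i < r) W i j.

(* maximal row sum (row sums of a nonnegative matrix are >= 0, so 0 is a
   harmless neutral element when r > 0). *)
Definition max_row_sum (R : realType) (r n : nat) (W : 'M[R]_(r, n)) : R :=
  \big[Num.max/0]_(i < r) row_sum W i.

(* Main.v *)
Require Import Defs.
From mathcomp Require Import all_boot all_order all_algebra.
From mathcomp Require Import all_reals.
From mathcomp Require Import ring lra.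
From mathcomp.real_closed Require Import complex.
Import Order.TTheory GRing.Theory Num.Theory.
Local Open Scope ring_scope.

Section Rayleigh.
Import Num.Def.
Local Open Scope sesquilinear_scope.
Lemma rayleigh (R : realType) n (M : 'M[R]_n.+1) (u : 'rV[R]_n.+1) :
  M^T = M -> exists2 l, eigenvalue M l & (u *m M *m u^T) 0 0 <= l * (u *m u^T) 0 0.
Proof.
move=> Msym.
pose toC := real_complex R.
have realC : forall x : R, toC x \is Num.real.
  by move=> x; rewrite /toC /real_complex_def complex_real.
have conjR : forall x : R, conjC (toC x) = toC x.
  by move=> x; rewrite conj_Creal.
pose Mc := map_mx toC M.
have Mh : Mc \is hermsymmx.
  rewrite qualifE expr0 scale1r; apply/eqP/matrixP => i j.
  by rewrite !mxE conjR -{1}Msym mxE.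
pose P := spectralmx Mc; pose d := spectral_diag Mc.
have PU : P \is unitarymx := spectral_unitarymx Mc.
have Pu : P \in unitmx := spectral_unit Mc.
have Mcd : Mc = P^t* *m diag_mx d *m P.
  by rewrite -invmx_unitary //; apply/orthomx_spectralP/hermitian_normalmx.
have PtP : P^t* *m P = 1%:M by rewrite -invmx_unitary // mulVmx.
have PPt : P *m P^t* = 1%:M by apply/unitarymxP.
have dreal : forall k, d 0 k \is Num.real.
  by move=> k; apply: (mxOverP (hermitian_spectral_diag_real Mh)).
pose k0 := [arg max_(k > ord0) complex.Re (d 0 k)]%O.
have dk0 : forall k, complex.Re (d 0 k) <= complex.Re (d 0 k0).
  rewrite /k0; case: (arg_maxP (fun k => complex.Re (d 0 k)) (isT : predT ord0)).
  by move=> i _ H k; apply: H.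
have ev : eigenvalue Mc (d 0 k0).
  apply/eigenvalueP; exists (row k0 P).
    rewrite Mcd !mulmxA -row_mul PPt row1 mul_mx_diag.
    rewrite rowE scalemxAl; congr (_ *m _).
    apply/matrixP => i j; rewrite !mxE.
    by case: (j =P k0) => [->|_]; rewrite ?andbT ?andbF /= ?mulr0 ?mul0r // mulrC.
  apply/negP => /eqP H0.
  have := congr1 (fun A => (A *m P^t*) 0 k0) H0.
  rewrite -row_mul PPt row1 mul0mx !mxE eqxx => /eqP; rewrite eqxx /= ?mulr1n oner_eq0 //.
have evR : eigenvalue M (complex.Re (d 0 k0)).
  rewrite eigenvalue_root_char -(fmorph_root toC) map_char_poly
    -eigenvalue_root_char /toC.
  have E := RRe_real (dreal k0). move: ev. rewrite -{1}E. move=> H. exact: H.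
exists (complex.Re (d 0 k0)) => //.
pose uc := map_mx toC u.
pose w := uc *m P^t*.
have ucT : uc^T = uc^t*.
  by apply/matrixP => i j; rewrite !mxE conjR.
have tmul : forall (m1 m2 m3 : nat) (A : 'M[R[i]]_(m1, m2)) (B : 'M[R[i]]_(m2, m3)),
    (A *m B)^t* = B^t* *m A^t*.
  by move=> m1 m2 m3 A B; rewrite trmx_mul map_mxM.
have Pw : P *m uc^t* = w^t* by rewrite /w tmul trmxCK.
have key1 : toC ((u *m M *m u^T) 0 0) =
    \sum_k (d 0 k * (w 0 k * conjC (w 0 k))).
  have -> : toC ((u *m M *m u^T) 0 0) = (uc *m Mc *m uc^T) 0 0.
    by rewrite /uc /Mc map_trmx -!map_mxM [RHS]mxE.
  rewrite ucT Mcd !mulmxA -/w -(mulmxA _ P) Pw mul_mx_diag mxE.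
  by apply: eq_bigr => k _; rewrite !mxE mulrAC mulrC.
have key2 : toC ((u *m u^T) 0 0) = \sum_k (w 0 k * conjC (w 0 k)).
  have -> : toC ((u *m u^T) 0 0) = (uc *m uc^T) 0 0.
    by rewrite /uc map_trmx -map_mxM [RHS]mxE.
  rewrite ucT; have -> : uc *m uc^t* = w *m w^t* by rewrite /w tmul trmxCK mulmxA -(mulmxA uc) PtP mulmx1.
  rewrite mxE.
  by apply: eq_bigr => k _; rewrite !mxE.
suff H : toC ((u *m M *m u^T) 0 0) <= toC (complex.Re (d 0 k0)) * toC ((u *m u^T) 0 0).
  by move: H; rewrite -rmorphM /toC lecR.
rewrite key1 key2 mulr_sumr; apply: ler_sum => k _.
apply: ler_wpM2r; first exact: mul_conjC_ge0.
by rewrite -(RRe_real (dreal k)) /toC lecR.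
Qed.

End Rayleigh.

Lemma eig_le_zmax (R : realType) r n (W : 'M[R]_(r, n.+1)) a :
  (forall i j, 0 <= W i j) -> (forall j, col_sum W j = 1) ->
  eigenvalue (W^T *m W) a -> a <= max_row_sum W.
Proof.
move=> W0 Wc /eigenvalueP [v Hv vn0].
pose k := [arg max_(k > ord0) `|v 0 k|]%O.
have vk : forall j, `|v 0 j| <= `|v 0 k|.
  by rewrite /k; case: (arg_maxP (fun j => `|v 0 j|) (isT : predT ord0)) => i _ H j; apply: H.
have vk0 : 0 < `|v 0 k|.
  have [j vj] : exists j, v 0 j != 0.
    apply/existsP; apply: contraR vn0 => /existsPn H; apply/eqP/matrixP => i j.
    by rewrite ord1 mxE; apply/eqP; move: (H j); rewrite negbK.
  by apply: lt_le_trans (vk j); rewrite normr_gt0.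
have zmax_ge : forall i, row_sum W i <= max_row_sum W.
  by move=> i; apply: le_bigmax.
have Mjk : forall j, 0 <= (W^T *m W) j k.
  by move=> j; rewrite mxE; apply: sumr_ge0 => i _; rewrite !mxE mulr_ge0.
have colM : \sum_j (W^T *m W) j k <= max_row_sum W.
  under eq_bigr do rewrite mxE.
  rewrite exchange_big /=.
  apply: le_trans (_ : \sum_i W i k * max_row_sum W <= _).
    apply: ler_sum => i _.
    under eq_bigr do rewrite mxE.
    rewrite -mulr_suml mulrC; apply: ler_wpM2l; first exact: W0.
    exact: zmax_ge.
  by rewrite -mulr_suml; have := Wc k; rewrite /col_sum => ->; rewrite mul1r.
have main : `|a| * `|v 0 k| <= `|v 0 k| * max_row_sum W.
  have E : a * v 0 k = \sum_j v 0 j * (W^T *m W) j k.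
    by move/matrixP: Hv => /(_ 0 k); rewrite !mxE => <-.
  rewrite -normrM E; apply: le_trans (ler_norm_sum _ _ _) _.
  apply: le_trans (_ : \sum_j `|v 0 k| * (W^T *m W) j k <= _).
    apply: ler_sum => j _; rewrite normrM (ger0_norm (Mjk j)).
    by apply: ler_wpM2r; [exact: Mjk | exact: vk].
  by rewrite -mulr_sumr; apply: ler_wpM2l; [exact: normr_ge0 | exact: colM].
have : `|a| <= max_row_sum W.
  by rewrite -(ler_pM2r vk0) [max_row_sum W * _]mulrC.
exact: le_trans (ler_norm a).
Qed.

Lemma sumsq_dev (R : realType) r (z : 'I_r -> R) : (0 < r)%N ->
  \sum_i (z i - (\sum_j z j) / r%:R) ^+ 2 = \sum_i z i ^+ 2 - (\sum_j z j) ^+ 2 / r%:R.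
Proof.
move=> r0.
have rn0 : (r%:R : R) != 0 by rewrite pnatr_eq0 -lt0n.
rewrite (eq_bigr (fun i => z i ^+ 2 - (z i * ((\sum_j z j) / r%:R)) *+ 2 + ((\sum_j z j) / r%:R) ^+ 2)); last by move=> i _; rewrite sqrrB.
rewrite big_split /= sumrB sumrMnl -mulr_suml sumr_const card_ord.
rewrite -(mulr_natr _ 2) -(mulr_natr _ r).

field; exact: rn0.
Qed.

Theorem proposition7 (R : realType) (r n : nat) (W : 'M[R]_(r, n)) (s1 : R) :
  (0 < r)%N -> (r <= n)%N ->
  (forall i j, 0 <= W i j) ->
  \rank W = r ->
  (forall j, col_sum W j = 1) ->
  largest_singular_value W s1 ->
  (n%:R / r%:R <= s1 ^+ 2 /\ s1 ^+ 2 <= max_row_sum W) /\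
  (s1 ^+ 2 = n%:R / r%:R <-> (forall i k, row_sum W i = row_sum W k)) /\
  (s1 ^+ 2 = n%:R / r%:R <-> max_row_sum W = n%:R / r%:R).
Proof.
case: n W => [|n] W r0 rn; first by rewrite leqn0 in rn; rewrite (eqP rn) in r0.
move=> W0 _ Wc [[s0 sev] smax].
pose z := row_sum W.
have zsum : \sum_i z i = n.+1%:R.
  rewrite /z /row_sum exchange_big /=.
  transitivity (\sum_(j < n.+1) (1:R)); first by apply: eq_bigr => j _; exact: Wc j.
  by rewrite sumr_const card_ord.
have z0 : forall i, 0 <= z i by move=> i; apply: sumr_ge0 => j _.
have Msym : (W^T *m W)^T = W^T *m W by rewrite trmx_mul trmxK.
pose u := const_mx 1 : 'rV[R]_n.+1.
have [l evl Hl] := @rayleigh R n (W^T *m W) u Msym.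
have uW : forall i, (u *m W^T) 0 i = z i.
  by move=> i; rewrite mxE; apply: eq_bigr => j _; rewrite !mxE mul1r.
have uMu : (u *m (W^T *m W) *m u^T) 0 0 = \sum_i z i ^+ 2.
  rewrite mulmxA -mulmxA.
  have -> : W *m u^T = (u *m W^T)^T by rewrite trmx_mul trmxK.
  by rewrite mxE; apply: eq_bigr => i _; rewrite [X in _ * X]mxE uW expr2.
have uu : (u *m u^T) 0 0 = n.+1%:R.
  rewrite mxE (eq_bigr (fun _ => 1)); first by rewrite sumr_const card_ord.
  by move=> j _; rewrite !mxE mulr1.
rewrite uMu uu in Hl.
pose N : R := n.+1%:R.
have N0 : 0 < N by rewrite /N ltr0n.
have rr0 : (0 : R) < r%:R by rewrite ltr0n.
have l0 : 0 <= l.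
  have : 0 <= l * N by apply: le_trans Hl; apply: sumr_ge0 => i _; exact: sqr_ge0.
  by rewrite pmulr_lge0.
have ls : l <= s1 ^+ 2.
  have sv : singular_value W (Num.sqrt l) by split; [exact: sqrtr_ge0 | rewrite sqr_sqrtr].
  have H := smax _ sv.
  rewrite -(sqr_sqrtr l0) !expr2; apply: ler_pM => //; exact: sqrtr_ge0.
have dev := @sumsq_dev R r z r0.
rewrite zsum in dev.
have devge0 : 0 <= \sum_i (z i - N / r%:R) ^+ 2 by apply: sumr_ge0 => i _; exact: sqr_ge0.
have lb : N / r%:R <= l.
  rewrite -(ler_pM2r N0).
  have : N ^+ 2 / r%:R <= \sum_i z i ^+ 2 by rewrite -subr_ge0 -dev.
  move=> H; apply: le_trans (le_trans H Hl).
  by rewrite expr2 mulrAC.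
have ub : s1 ^+ 2 <= max_row_sum W := @eig_le_zmax R r n W (s1 ^+ 2) W0 Wc sev.
have zmax_ge : forall i, z i <= max_row_sum W by move=> i; apply: le_bigmax.
have eqz : (forall i k, z i = z k) -> forall i, z i = N / r%:R.
  move=> H i; have : \sum_k z k = z i *+ r.
    by rewrite (eq_bigr (fun _ => z i)) ?sumr_const ?card_ord // => k _; rewrite (H k i).
  rewrite zsum -(mulr_natr (z i) r) => E; rewrite /N E mulfK //; exact: lt0r_neq0.
have zmaxc : (forall i k, z i = z k) -> max_row_sum W = N / r%:R.
  move=> H; apply: le_anti; apply/andP; split.
    apply: bigmax_le => [|i _]; first by apply: divr_ge0; apply: ltW.
    by move: (eqz H i); rewrite /z => ->.
  by rewrite -(eqz H (Ordinal r0)); apply: zmax_ge.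
have fromeq : s1 ^+ 2 = N / r%:R -> forall i k, z i = z k.
  move=> Hs.
  have H1 : \sum_i z i ^+ 2 <= N ^+ 2 / r%:R.
    apply: le_trans Hl _; apply: le_trans (_ : s1 ^+ 2 * N <= _).
      by apply: ler_wpM2r; [apply: ltW | ].
    by rewrite Hs expr2 mulrAC.
  have H2 : \sum_i (z i - N / r%:R) ^+ 2 = 0.
    by apply: le_anti; rewrite devge0 andbT dev subr_le0.
  have H3 := psumr_eq0P (fun i _ => sqr_ge0 (z i - N / r%:R)) H2.
  have H4 : forall i, z i = N / r%:R.
    by move=> i; apply/eqP; rewrite -subr_eq0 -sqrf_eq0; apply/eqP; apply: H3.
  by move=> i k; rewrite !H4.
split; first by split; [apply: le_trans lb ls | exact: ub].
split; split.
- exact: fromeq.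
- move=> H; apply: le_anti; apply/andP; split; last exact: le_trans lb ls.
  by rewrite -(zmaxc H).
- by move=> Hs; apply: zmaxc; apply: fromeq.
- move=> Hz; apply: le_anti; apply/andP; split; last exact: le_trans lb ls.
  by rewrite -Hz.
Qed.
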